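(* Let $q=2^n$, let $B$ be a $k$-subset of $\mathrm{GF}(q)$, and let $E$ be a subset of $\mathrm{GF}(q)$ such that $\hat f_B(\mu)=\hat f_E(\mu^d)$ for all $\mu\in\mathrm{GF}(q)$, where $\gcd(d,q-1)=1$. For pairwise distinct $u_1,u_2,u_3\in\mathrm{GF}(q)$ let $I_B(u_1,u_2,u_3)=|\{(x,y)\in\mathrm{GF}(q)^2: u_ix+y\in B \ (i=1,2,3)\}|$. Then \[I_B(u_1,u_2,u_3)=N_E\big((u_2+u_3)^d,(u_3+u_1)^d,(u_1+u_2)^d\big).\]
   Context: $\mathrm{Tr}$ is the absolute trace $\mathrm{GF}(2^n)\to\mathrm{GF}(2)$. For a subset $S\subseteq\mathrm{GF}(q)$, $f_S$ is its characteristic function as a Boolean function, and $\hat f(\mu)=\sum_{x\in\mathrm{GF}(2^n)}(-1)^{f(x)+\mathrm{Tr}(\mu x)}$ is the Walsh transform. For $S\subseteq\mathrm{GF}(q)$ and $a,b,c\in\mathrm{GF}(q)$, $N_S(a,b,c)$ is the number of triples $(x,y,z)\in S^3$ with $ax+by+cz=0$. *)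

(* Defs.v *)
From HB Require Import structures.
From mathcomp Require Import all_boot all_order all_algebra all_field.
Set Implicit Arguments. Unset Strict Implicit. Unset Printing Implicit Defensive.
Import GRing.Theory.
Local Open Scope ring_scope.

(* Absolute trace GF(2^n) -> GF(2), realised inside F (values 0 or 1). *)
Definition absTr (F : finFieldType) (n : nat) (x : F) : F :=
  \sum_(i < n) x ^+ (2 ^ i).

Definition trsign (F : finFieldType) (n : nat) (x : F) : int :=
  if absTr n x == 0 then 1 else -1.

Definition charf (F : finFieldType) (S : {set F}) (x : F) : bool := x \in S.

Definition walsh (F : finFieldType) (n : nat) (f : F -> bool) (mu : F) : int :=
  \sum_(x : F) (-1) ^+ (f x) * trsign n (mu * x).

Definition NS (F : finFieldType) (S : {set F}) (a b c : F) : nat :=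
  #|[set t : F * F * F | [&& t.1.1 \in S, t.1.2 \in S, t.2 \in S &
                          a * t.1.1 + b * t.1.2 + c * t.2 == 0]]|.

Definition IB (F : finFieldType) (B : {set F}) (u1 u2 u3 : F) : nat :=
  #|[set p : F * F | [&& u1 * p.1 + p.2 \in B, u2 * p.1 + p.2 \in B &
                       u3 * p.1 + p.2 \in B]]|.

(* Main.v *)
Require Import Defs.
From HB Require Import structures.
From mathcomp Require Import all_boot all_order all_algebra all_field zify ring.
Set Implicit Arguments. Unset Strict Implicit. Unset Printing Implicit Defensive.
Import GRing.Theory Num.Theory.
Local Open Scope ring_scope.

Lemma char2 (F : finFieldType) n : #|F| = (2 ^ n)%N -> 2%N \in [pchar F].
Proof. by move=> hq; apply: (card_finPcharP hq). Qed.

Lemma two0 (F : finFieldType) n : #|F| = (2 ^ n)%N -> (2%:R : F) = 0.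
Proof. by move=> /char2; rewrite inE => /andP[_ /eqP]. Qed.

Lemma n_gt0 (F : finFieldType) n : #|F| = (2 ^ n)%N -> (0 < n)%N.
Proof. move=> hq; have := finNzRing_gt1 F; rewrite hq; by case: n {hq}. Qed.

Lemma frob2 (F : finFieldType) n i (x y : F) : #|F| = (2 ^ n)%N ->
  (x + y) ^+ (2 ^ i) = x ^+ (2 ^ i) + y ^+ (2 ^ i).
Proof.
move=> hq; elim: i => [|i IH]; first by rewrite !expr1.
rewrite expnS mulnC !exprM IH sqrrD -mulr_natr.
by rewrite (two0 hq) mulr0 addr0.
Qed.

Lemma absTrD (F : finFieldType) n (x y : F) : #|F| = (2 ^ n)%N ->
  absTr n (x + y) = absTr n x + absTr n y.
Proof. by move=> hq; rewrite /absTr -big_split /=; apply: eq_bigr => i _; rewrite (frob2 _ _ _ hq). Qed.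

Lemma absTr_sq (F : finFieldType) n (x : F) : #|F| = (2 ^ n)%N ->
  absTr n x ^+ 2 = absTr n x.
Proof.
move=> hq; have ch := char2 hq.
have -> : absTr n x ^+ 2 = pFrobenius_aut ch (absTr n x) by [].
rewrite /absTr rmorph_sum /=.
have n0 := n_gt0 hq; case: n hq n0 => // m hq _.
rewrite big_ord_recr big_ord_recl /=.
under eq_bigr do rewrite pFrobenius_autE -exprM -expnSr.
rewrite pFrobenius_autE -exprM -expnSr -hq expf_card expn0 expr1.
by rewrite addrC; congr (_ + _); apply: eq_bigr => i _.
Qed.

Lemma absTr01 (F : finFieldType) n (x : F) : #|F| = (2 ^ n)%N ->
  (absTr n x == 0) || (absTr n x == 1).
Proof.
move=> hq; have := absTr_sq x hq; set t := absTr n x => h.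
have : t * (t - 1) == 0 by rewrite mulrBr mulr1 -expr2 h subrr.
by rewrite mulf_eq0 subr_eq0.
Qed.

Lemma trsignD (F : finFieldType) n (x y : F) : #|F| = (2 ^ n)%N ->
  trsign n (x + y) = trsign n x * trsign n y.
Proof.
move=> hq; rewrite /trsign (absTrD _ _ hq).
have h11 : (1 + 1 : F) = 0 by rewrite -mulr2n (two0 hq).
by case/orP: (absTr01 x hq) => /eqP->; case/orP: (absTr01 y hq) => /eqP->;
  rewrite ?addr0 ?add0r ?h11 ?eqxx ?oner_eq0.
Qed.

Lemma trsign0 (F : finFieldType) n : trsign n (0 : F) = 1.
Proof.
rewrite /trsign /absTr big1 ?eqxx // => i _; by rewrite expr0n expn_eq0.
Qed.

Lemma absTr_nontriv (F : finFieldType) n : #|F| = (2 ^ n)%N ->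
  exists t : F, absTr n t = 1.
Proof.
move=> hq; have n0 := n_gt0 hq.
case: (pickP (fun t : F => absTr n t == 1)) => [t /eqP ht|hall]; first by exists t.
exfalso.
have h0 : forall t : F, absTr n t = 0.
  by move=> t; case/orP: (absTr01 t hq) => /eqP // h; move: (hall t); rewrite h eqxx.
case: n hq n0 h0 {hall} => // m hq _ h0.
pose p : {poly F} := \sum_(i < m.+1) 'X^(2 ^ i).
have pE : forall x, p.[x] = absTr m.+1 x.
  by move=> x; rewrite /p horner_sum /absTr; apply: eq_bigr => i _; rewrite hornerXn.
have pn0 : p != 0.
  apply/eqP => /(congr1 (fun q : {poly F} => q`_(2 ^ m))); rewrite coef0 /p coef_sum.
  rewrite (bigD1 ord_max) //= coefXn eqxx big1 ?addr0; first by move/eqP; rewrite oner_eq0.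
  move=> i ne; rewrite coefXn eqn_exp2l //; case: eqP => // h.
  by case/eqP: ne; apply: val_inj; rewrite /= -h.
have szp : (size p <= (2 ^ m).+1)%N.
  rewrite /p; apply: (leq_trans (size_sum _ _ _)).
  apply/bigmax_leqP => i _; rewrite size_polyXn ltnS leq_exp2l //.
  by rewrite -ltnS.
have := max_poly_roots pn0 (_ : all (root p) (enum F)) (enum_uniq F).
rewrite -cardE hq => /(_ _)/leq_trans/(_ szp).
rewrite expnS mul2n -addnn ltnS => H.
have : (2 ^ m + 2 ^ m <= 2 ^ m)%N.
  by apply: H; apply/allP => x _; rewrite /root pE h0.
by rewrite -{3}(addn0 (2 ^ m)%N) leq_add2l leqn0 expn_eq0.
Qed.

Lemma sum_trsign (F : finFieldType) n (w : F) : #|F| = (2 ^ n)%N ->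
  \sum_(mu : F) trsign n (mu * w) = if w == 0 then (#|F|)%:R else 0.
Proof.
move=> hq; case: eqP => [->|/eqP wn0].
  under eq_bigr do rewrite mulr0 trsign0.
  by rewrite sumr_const.
have -> : \sum_(mu : F) trsign n (mu * w) = \sum_(x : F) trsign n x.
  by rewrite [RHS](reindex_inj (mulIf wn0)).
have [t ht] := absTr_nontriv hq.
have tt : trsign n t = -1 by rewrite /trsign ht oner_eq0.
set S := \sum_x _.
have hS : S = - S.
  rewrite {1}/S (reindex_inj (addIr t)) /=.
  under eq_bigr do rewrite (trsignD _ _ hq) tt mulrN1.
  by rewrite sumrN.
lia.
Qed.

Definition hat (F : finFieldType) n (S : {set F}) (nu : F) : int :=
  \sum_(x : F) (x \in S)%:R * trsign n (nu * x).

Lemma walshE (F : finFieldType) n (S : {set F}) mu : #|F| = (2 ^ n)%N ->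
  walsh n (charf S) mu = (if mu == 0 then (#|F|)%:R else 0) - 2 * hat n S mu.
Proof.
move=> hq; rewrite /walsh /hat -(sum_trsign mu hq) mulr_sumr -sumrB.
apply: eq_bigr => x _; rewrite /charf [x * mu]mulrC.
by case: (x \in S); rewrite /= ?expr0 ?expr1; ring.
Qed.

Lemma triple_sum (F : finType) (G : F * F * F -> int) :
  \sum_t G t = \sum_x \sum_y \sum_z G ((x, y), z).
Proof. by rewrite pair_big /= pair_big /=; apply: eq_bigr => -[[x y] z]. Qed.

Lemma prod3 (F : finType) (f g h : F -> int) :
  (\sum_x f x) * (\sum_y g y) * (\sum_z h z) = \sum_x \sum_y \sum_z f x * g y * h z.
Proof.
rewrite !mulr_suml; apply: eq_bigr => x _; rewrite [f x * _]mulr_sumr mulr_suml.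
by apply: eq_bigr => y _; rewrite mulr_sumr.
Qed.

Lemma NS_fourier (F : finFieldType) n (S : {set F}) a b c : #|F| = (2 ^ n)%N ->
  (NS S a b c)%:R * (#|F|)%:R =
  \sum_(mu : F) hat n S (mu * a) * hat n S (mu * b) * hat n S (mu * c).
Proof.
move=> hq.
under eq_bigr do rewrite /hat prod3.
rewrite exchange_big; under eq_bigr do rewrite exchange_big; under eq_bigr do under eq_bigr do rewrite exchange_big.
rewrite /NS -sum1_card big_mkcond /= natr_sum triple_sum !mulr_suml.
apply: eq_bigr => x _; rewrite mulr_suml; apply: eq_bigr => y _; rewrite mulr_suml; apply: eq_bigr => z _.
have e : forall mu : F, (x \in S)%:R * trsign n (mu * a * x) * ((y \in S)%:R * trsign n (mu * b * y)) * ((z \in S)%:R * trsign n (mu * c * z)) = ((x \in S)%:R * (y \in S)%:R * (z \in S)%:R) * trsign n (mu * (a * x + b * y + c * z)) :> int.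
  by move=> mu; rewrite !mulrDr !mulrA !(trsignD _ _ hq); ring.
under eq_bigr do rewrite e.
rewrite -mulr_sumr (sum_trsign _ hq) inE /=.
by case: (x \in S); case: (y \in S); case: (z \in S); case: eqP; rewrite /= ?mul0r ?mul1r ?mulr0.
Qed.

Lemma IB_NS (F : finFieldType) n (B : {set F}) (u1 u2 u3 : F) : #|F| = (2 ^ n)%N ->
  u1 != u2 -> IB B u1 u2 u3 = NS B (u2 + u3) (u3 + u1) (u1 + u2).
Proof.
move=> hq h12; have t0 := two0 hq.
have D0 : u1 - u2 != 0 by rewrite subr_eq0.
pose phi (p : F * F) := ((u1 * p.1 + p.2, u2 * p.1 + p.2), u3 * p.1 + p.2).
have phi_inj : injective phi.
  move=> [x y] [x' y'] [e1 e2 _].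
  have : (u1 - u2) * (x - x') = 0.
    have -> : (u1 - u2) * (x - x') = (u1 * x + y - (u2 * x + y)) - (u1 * x' + y' - (u2 * x' + y')) by ring.
    by rewrite e1 e2 subrr.
  move/eqP; rewrite mulf_eq0 (negbTE D0) /= subr_eq0 => /eqP ex.
  by move: e1; rewrite ex => /addrI ->.
rewrite /IB /NS -(card_imset _ phi_inj); apply: eq_card => -[[b1 b2] b3]; apply/idP/idP.
  move=> /imsetP[[x y] hP [-> -> ->]]; rewrite inE /= in hP; rewrite inE /=.
  case/and3P: hP => -> -> -> /=; apply/eqP.
  have -> : (u2 + u3) * (u1 * x + y) + (u3 + u1) * (u2 * x + y) + (u1 + u2) * (u3 * x + y)
     = 2%:R * ((u1 * u2 + u2 * u3 + u3 * u1) * x + (u1 + u2 + u3) * y) by ring.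
  by rewrite t0 mul0r.
rewrite inE /= => /and4P[h1 h2 h3 /eqP he].
pose x := (b1 - b2) / (u1 - u2); pose y := b1 - u1 * x.
have hx : (u1 - u2) * x = b1 - b2 by rewrite /x mulrC divfK.
have e1 : u1 * x + y = b1 by rewrite /y; ring.
have e2 : u2 * x + y = b2.
  have -> : u2 * x + y = b1 - (u1 - u2) * x by rewrite /y; ring.
  by rewrite hx; ring.
have e3 : u3 * x + y = b3.
  apply: (mulfI D0); apply/eqP; rewrite -subr_eq0 -mulrBr.
  have -> : (u1 - u2) * (u3 * x + y - b3) = (u3 - u1) * ((u1 - u2) * x) + (u1 - u2) * (b1 - b3) by rewrite /y; ring.
  rewrite hx.
  have -> : (u3 - u1) * (b1 - b2) + (u1 - u2) * (b1 - b3) = ((u2 + u3) * b1 + (u3 + u1) * b2 + (u1 + u2) * b3) - 2%:R * (u3 * b2 + u1 * b3 + u2 * b1) by ring.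
  by rewrite he t0 mul0r subrr.
apply/imsetP; exists (x, y); last by rewrite /phi /= e1 e2 e3.
by rewrite inE /= e1 e2 e3 h1 h2 h3.
Qed.

Lemma exp_cycle (F : finFieldType) (x : F) k : x ^+ (k * #|F|.-1 + 1) = x.
Proof.
elim: k => [|k IH]; first by rewrite mul0n add0n expr1.
have -> : (k.+1 * #|F|.-1 + 1 = (k * #|F|.-1 + 1) + #|F|.-1)%N by rewrite mulSn; lia.
by rewrite exprD IH -exprS prednK ?expf_card // (ltn_trans _ (finNzRing_gt1 F)).
Qed.

Unset Implicit Arguments.
Theorem lemma6 (F : finFieldType) (n k d : nat) (B E : {set F})
  (hq : #|F| = (2 ^ n)%N) (hB : #|B| = k)
  (hd : coprime d (2 ^ n).-1)
  (hW : forall mu : F, walsh n (charf B) mu = walsh n (charf E) (mu ^+ d))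
  (u1 u2 u3 : F) (h12 : u1 != u2) (h13 : u1 != u3) (h23 : u2 != u3) :
  IB B u1 u2 u3 = NS E ((u2 + u3) ^+ d) ((u3 + u1) ^+ d) ((u1 + u2) ^+ d).
Proof.
case: (posnP d) => [d0|dpos].
  exfalso; move: hd; rewrite d0 /coprime gcd0n -hq => /eqP hF.
  have : (size [:: u1; u2; u3] <= #|F|)%N.
    by rewrite -(card_uniqP _) ?max_card //= !inE negb_or h12 h13 h23.
  have F2 : #|F| = 2%N by move: (finNzRing_gt1 F) hF; lia.
  by rewrite F2.
have pw_inj : injective (fun x : F => x ^+ d).
  case: (egcdnP (2 ^ n).-1 dpos) => km kn hk _.
  move: hd; rewrite /coprime => /eqP g1; rewrite g1 -hq in hk.
  apply: (can_inj (g := fun x : F => x ^+ km)) => x /=.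
  by rewrite -exprM mulnC hk exp_cycle.
have hh : forall mu : F, hat n B mu = hat n E (mu ^+ d).
  move=> mu; have := hW mu; rewrite !(walshE _ _ hq) expf_eq0 dpos /=.
  have two_nz : (2:int) != 0 by [].
  by move/addrI/oppr_inj/(mulfI two_nz).
rewrite (@IB_NS F n B u1 u2 u3 hq h12).
have qn0 : (#|F|%:R : int) != 0 by rewrite pnatr_eq0 -lt0n (ltn_trans _ (finNzRing_gt1 F)).
apply/eqP; rewrite -(eqr_nat int) -(inj_eq (mulIf qn0)).
rewrite !(@NS_fourier F n _ _ _ _ hq); apply/eqP.
under eq_bigr do rewrite !hh !exprMn.
by rewrite [RHS](reindex_inj pw_inj).
Qed.
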